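(* Let $G=(V,E)$ be a simple undirected graph with $n=|V|$ vertices and $m=|E|$ edges, let $b$ be a real number, and let $$\mathcal{P}_1=\Big\{(x,y)\in\mathbb{R}^m_{+}\times[0,1]^n:\ 1-y_u-y_v\le x_{uv}\ \text{for all } \{u,v\}\in E,\ \ \textstyle\sum_{v\in V}y_v\le b\Big\}.$$ If $b\ge 1$, then for every edge $\{u,v\}\in E$ the inequality $1-y_u-y_v\le x_{uv}$ is facet-defining for $\mathcal{P}_1$.
   Context: $x$ is indexed by edges and $y$ by vertices of $G$; $\mathcal{P}_1$ is the linear relaxation of the MIP formulation of the 1-hop distance-based critical node detection problem. An inequality is facet-defining if it is valid for $\mathcal{P}_1$ and the face it induces has dimension $\dim\mathcal{P}_1-1$. *)

(* Defs.v *)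
From HB Require Import structures.
From mathcomp Require Import all_boot all_order all_algebra.
From mathcomp Require Import reals.
Set Implicit Arguments. Unset Strict Implicit. Unset Printing Implicit Defensive.
Import Order.TTheory GRing.Theory Num.Theory.
Local Open Scope ring_scope.

Definition simple_graph (V : finType) (E : {set {set V}}) : Prop :=
  forall s, s \in E -> #|s| = 2%N.

Notation edge E := {s : {set _} | s \in E}.

Notation point R E := ({ffun edge E -> R^o} * {ffun _ -> R^o})%type.

Definition aff_indep (R : fieldType) (vT : vectType R) (k : nat)
    (P : 'I_k.+1 -> vT) : bool :=
  free [seq P (lift ord0 i) - P ord0 | i <- enum 'I_k].

(* S has affine dimension d (d = -1 iff S is empty): S contains k+1
   affinely independent points iff k <= d. *)
Definition is_affdim (R : fieldType) (vT : vectType R) (S : vT -> Prop)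
    (d : int) : Prop :=
  (-1 <= d) /\
  forall k : nat,
    (exists P : 'I_k.+1 -> vT, (forall i, S (P i)) /\ aff_indep P)
    <-> (k%:Z <= d).

Definition facet_defining (R : realFieldType) (vT : vectType R)
    (S : vT -> Prop) (f : vT -> R) (beta : R) : Prop :=
  (forall p, S p -> f p <= beta) /\
  exists d : int, is_affdim S d /\
    is_affdim (fun p => S p /\ f p = beta) (d - 1).

Definition P1 (R : realType) (V : finType) (E : {set {set V}}) (b : R)
    (p : ({ffun edge E -> R^o} * {ffun V -> R^o})%type) : Prop :=
  let x := p.1 in let y := p.2 in
  (forall e : edge E, 0 <= x e) /\
  (forall v : V, 0 <= y v <= 1) /\
  (forall (e : edge E) (u v : V), val e = [set u; v] -> 1 - y u - y v <= x e) /\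
  (\sum_(v : V) y v <= b).

(* Main.v *)
Require Import Defs.
From HB Require Import structures.
From mathcomp Require Import all_boot all_order all_algebra.
From mathcomp Require Import reals zify ring lra.
Import Order.TTheory GRing.Theory Num.Theory.
Local Open Scope ring_scope.

Lemma aff_of_seq (K : fieldType) (W : vectType K) (S : W -> Prop) (p0 : W)
  (s : seq W) : S p0 -> (forall w, w \in s -> S (p0 + w)) -> free s ->
  forall k, (k <= size s)%N ->
  exists P : 'I_k.+1 -> W, (forall i, S (P i)) /\ aff_indep P.
Proof.
move=> Sp0 Ss fs k hk.
set s' := take k s.
have sz : size s' = k by rewrite size_takel.
have fs' : free s' by move: fs; rewrite -(cat_take_drop k s) => /catl_free.
exists (fun i => p0 + nth 0 (0 :: s') i); split.
  move=> [[|i] hi] /=; first by rewrite addr0.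
  apply: Ss; apply: (mem_take (n0:=k)); apply: mem_nth; rewrite sz; lia.
rewrite /aff_indep.
suff -> : [seq p0 + nth 0 (0 :: s') (lift ord0 i) - (p0 + nth 0 (0 :: s') ord0) | i <- enum 'I_k] = s' by [].
rewrite /= addr0.
have -> : [seq p0 + nth 0 (0 :: s') (lift ord0 i) - p0 | i <- enum 'I_k] = [seq nth 0 s' i | i <- iota 0 k].
  rewrite -val_enum_ord -map_comp; apply: eq_map => i /=.
  by rewrite addrC addKr.
by rewrite -sz -/(mkseq _ _) mkseq_nth.
Qed.

Lemma greedy (K : fieldType) (W : vectType K) (U : {vspace W}) (G : W -> Prop) :
  (forall w, w \in U -> exists t, t != 0 /\ G (t *: w)) ->
  exists s, [/\ free s, size s = \dim U, {subset s <= U} & forall w, w \in s -> G w].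
Proof.
move=> hG.
suff : forall n, (n <= \dim U)%N -> exists s, [/\ free s, size s = n, {subset s <= U} & forall w, w \in s -> G w].
  by move/(_ (\dim U) (leqnn _)).
elim=> [|n IH] hn.
  by exists [::]; split => //; exact: nil_free.
have [s [fs sz sU sG]] := IH (ltnW hn).
have dims : \dim <<s>> = n by move: fs; rewrite /free sz => /eqP.
have [w wB wn] : exists2 w, w \in vbasis U & w \notin <<s>>%VS.
  case: (boolP (all (fun w => w \in <<s>>%VS) (vbasis U))) => [/allP hall|].
    have : (<<vbasis U>> <= <<s>>)%VS by apply/span_subvP.
    rewrite (span_basis (vbasisP U)) => /dimvS; rewrite dims; lia.
  by rewrite -has_predC => /hasP [w h1 h2]; exists w.
have wU : w \in U by exact: vbasis_mem.
have [t [t0 Gt]] := hG w wU.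
exists (t *: w :: s); split => //.
- rewrite free_cons fs andbT; apply: contra wn => h.
  by rewrite -(scalerK t0 w); apply: memvZ.
- by rewrite /= sz.
- by move=> x; rewrite inE => /orP [/eqP ->|/sU //]; apply: memvZ.
- by move=> x; rewrite inE => /orP [/eqP ->|/sG //].
Qed.

Lemma aff_up (K : fieldType) (W : vectType K) (k : nat) (P : 'I_k.+1 -> W)
  (U : {vspace W}) : aff_indep P ->
  (forall i, P (lift ord0 i) - P ord0 \in U) -> (k <= \dim U)%N.
Proof.
rewrite /aff_indep /free => /eqP; rewrite size_map size_enum_ord => hd hU.
rewrite -{1}[k]hd; apply: dimvS; apply/span_subvP => x /mapP [i _ ->]; exact: hU.
Qed.
Arguments greedy {K W U} G _.
Arguments aff_up {K W k P} U _ _.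
Arguments aff_of_seq {K W} S p0 s _ _ _ k _.

Lemma edge_ends (V : finType) (u v a c : V) : #|[set u; v]| = 2%N ->
  [set a; c] = [set u; v] -> (a = u /\ c = v) \/ (a = v /\ c = u).
Proof.
move=> h2 hs.
have ac : a != c.
  apply/negP => /eqP ac; move: h2; rewrite -hs ac setUid cards1 => //.
have : a \in [set u; v] by rewrite -hs !inE eqxx.
have : c \in [set u; v] by rewrite -hs !inE eqxx orbT.
rewrite !inE => /orP [/eqP hc|/eqP hc] /orP [/eqP ha|/eqP ha].
- by move: ac; rewrite ha hc eqxx.
- by right.
- by left.
- by move: ac; rewrite ha hc eqxx.
Qed.

Section Spec.
Definition vT (R : realType) (V : finType) (E : {set {set V}}) :=
  ({ffun edge E -> R^o} * {ffun V -> R^o})%type.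
Definition cst (R : realType) (V : finType) : R := (4 * #|V|%:R)^-1.
Definition p0 (R : realType) (V : finType) (E : {set {set V}}) (e : edge E) : vT R V E :=
  ([ffun e' => if e' == e then 1 - 2 * cst R V else 1], [ffun _ => cst R V]).
End Spec.

Lemma cst_bounds (R : realType) (V : finType) (u : V) :
  0 < cst R V /\ cst R V <= 1/4 /\ \sum_(v : V) cst R V = 1/4.
Proof.
have n0 : (0 < #|V|)%N by apply/card_gt0P; exists u.
have n1 : (1 <= #|V|%:R :> R) by rewrite ler1n.
have hc : cst R V * (4 * #|V|%:R) = 1 by rewrite /cst mulVf // mulf_neq0 // ?pnatr_eq0 //; lia.
have c0 : 0 < cst R V by rewrite /cst invr_gt0 mulr_gt0 // ltr0n.
split; [by []|split].
- nra.
- rewrite sumr_const -mulr_natr.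
  have -> : #|[pred _ : V | true]| = #|V| by apply: eq_card.
  lra.
Qed.

Lemma face_dir (R : realType) (V : finType) (E : {set {set V}}) (b : R) (hb : 1 <= b)
  (e : edge E) (u v : V) (he : val e = [set u; v]) (h2 : #|[set u; v]| = 2%N)
  (w : vT R V E) (hw : w.2 u + w.2 v + w.1 e = 0) :
  exists t : R, t != 0 /\ (@P1 R V E b (@p0 R V E e + t *: w) /\
     1 - (@p0 R V E e + t *: w).2 u - (@p0 R V E e + t *: w).2 v - (@p0 R V E e + t *: w).1 e = 0).
Proof.
have [c0 [c4 csum]] := @cst_bounds R V u.
set c := cst R V in c0 c4 csum *.
set M := 1 + \sum_e' `|w.1 e'| + \sum_v' `|w.2 v'|.
have s1 : 0 <= \sum_e' `|w.1 e'| by apply: sumr_ge0.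
have s2 : 0 <= \sum_v' `|w.2 v'| by apply: sumr_ge0.
have M0 : 0 < M by rewrite /M; lra.
have bx : forall e', `|w.1 e'| <= M.
  move=> e'; rewrite /M (bigD1 e') //=.
  have : 0 <= \sum_(i | i != e') `|w.1 i| by apply: sumr_ge0.
  lra.
have by' : forall v', `|w.2 v'| <= M.
  move=> v'; rewrite /M (bigD1 v') //=.
  have : 0 <= \sum_(i | i != v') `|w.2 i| by apply: sumr_ge0.
  lra.
set t := c / (4 * M).
have t0 : 0 < t by rewrite /t divr_gt0 // mulr_gt0.
have tM : t * M = c / 4 by rewrite /t; field; rewrite gt_eqF.
have bnd : forall z, `|z| <= M -> - (c/4) <= t * z <= c/4.
    move=> z hz; rewrite -ler_norml normrM gtr0_norm // -tM. by rewrite ler_wpM2l // ltW.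
exists t; split; first by rewrite gt_eqF.
rewrite /P1 /p0 /= !ffunE /GRing.scale /=.
have htw : t * w.2 u + t * w.2 v + t * w.1 e = 0 by rewrite -!mulrDr hw mulr0.
split; last by rewrite eqxx -/c; lra.
split; [|split; [|split]].
- move=> e'; rewrite !ffunE /GRing.scale /=.
  have /andP[? ?] := bnd _ (bx e'); case: (e' == e); rewrite -/c; lra.
- move=> v'; rewrite !ffunE /GRing.scale /=.
  have /andP[? ?] := bnd _ (by' v'); rewrite -/c; apply/andP; split; lra.
- move=> e' a a' hs; rewrite !ffunE /GRing.scale /=.
  have /andP[? ?] := bnd _ (bx e'); have /andP[? ?] := bnd _ (by' a); have /andP[? ?] := bnd _ (by' a').
  case: eqP => [ee | _]; last by rewrite -/c; lra.
  subst e'; rewrite he in hs; have [[? ?]|[? ?]] := @edge_ends V u v a a' h2 (esym hs); subst a a'; rewrite -/c; lra.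
- have -> : \sum_v' ([ffun _ => c] + t *: w.2) v' = \sum_(v' : V) c + t * \sum_v' w.2 v'.
    rewrite mulr_sumr -big_split /=; apply: eq_bigr => i _; rewrite !ffunE.
    by rewrite /GRing.scale.
  have hs : \sum_v' w.2 v' <= \sum_v' `|w.2 v'| by apply: ler_sum => i _; apply: ler_norm.
  have : t * \sum_v' w.2 v' <= t * M by rewrite ler_wpM2l ?ltW //; rewrite /M; lra.
  lra.
Qed.

Definition phi (R : realType) (V : finType) (E : {set {set V}}) (e : edge E) (u v : V)
  (p : vT R V E) : R^o := p.2 u + p.2 v + p.1 e.
Lemma phi_lin (R : realType) (V : finType) (E : {set {set V}}) (e : edge E) (u v : V) :
  linear (@phi R V E e u v).
Proof. move=> a p q; rewrite /phi /= !ffunE /= /GRing.scale /=; ring. Qed.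
HB.instance Definition _ (R : realType) (V : finType) (E : {set {set V}}) (e : edge E) (u v : V) :=
  GRing.isLinear.Build R (vT R V E) R^o *:%R (@phi R V E e u v) (@phi_lin R V E e u v).

Lemma P1_mono (R : realType) (V : finType) (E : {set {set V}}) (b : R) (p q : vT R V E) :
  @P1 R V E b p -> (forall e', p.1 e' <= q.1 e') -> q.2 = p.2 -> @P1 R V E b q.
Proof.
move=> [h1 [h2 [h3 h4]]] hx hy; rewrite /P1 hy; split; [|split; [|split]] => //.
- by move=> e'; apply: le_trans (hx e').
- by move=> e' a c hs; apply: le_trans (hx e'); apply: h3.
Qed.

Theorem proposition3 (R : realType) (V : finType) (E : {set {set V}})
  (hG : simple_graph E) (b : R) (hb : 1 <= b)
  (e : edge E) (u v : V) (he : val e = [set u; v]) :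
  facet_defining (@P1 R V E b)
    (fun p : point R E => 1 - p.2 u - p.2 v - p.1 e) 0.
Proof.
have h2 : #|[set u; v]| = 2%N by rewrite -he; apply: hG; exact: valP e.
pose L : 'Hom(vT R V E, R^o) := linfun (@phi R V E e u v).
pose K := lker L.
have memK : forall w, (w \in K) = (w.2 u + w.2 v + w.1 e == 0).
  by move=> w; rewrite memv_ker lfunE.
pose Xe : vT R V E := ([ffun e' => if e' == e then 1 else 0], 0).
have phiXe : Xe.2 u + Xe.2 v + Xe.1 e = 1 by rewrite /Xe /= !ffunE eqxx !add0r.
have dimK : (\dim K).+1 = \dim (fullv : {vspace vT R V E}).
  have := limg_ker_dim L fullv; rewrite capfv => <-.
  suff -> : \dim (L @: fullv)%VS = 1%N by rewrite addn1.
  apply/eqP; rewrite eqn_leq; apply/andP; split.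
    by apply: leq_trans (dimvS (subvf _)) _; rewrite dimvf.
  rewrite lt0n dimv_eq0; apply/negP => /eqP h0.
  have : L Xe \in (L @: fullv)%VS by apply: memv_img; apply: memvf.
  rewrite h0 memv0 lfunE; change (Xe.2 u + Xe.2 v + Xe.1 e == 0 -> False); by rewrite phiXe oner_eq0.
have fdir : forall w, w \in K -> exists t : R, t != 0 /\
   (@P1 R V E b (@p0 R V E e + t *: w) /\ 1 - (@p0 R V E e + t *: w).2 u
     - (@p0 R V E e + t *: w).2 v - (@p0 R V E e + t *: w).1 e = 0).
  by move=> w; rewrite memK => /eqP hw; apply: face_dir.
have [t0 [_ hp0]] := fdir 0 (mem0v _).
rewrite scaler0 addr0 in hp0.
have [s [fs sz sK sG]] := greedy (fun w => @P1 R V E b (@p0 R V E e + w) /\ 1 - (@p0 R V E e + w).2 u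
     - (@p0 R V E e + w).2 v - (@p0 R V E e + w).1 e = 0) fdir.
split.
  by move=> p [_ [_ [hedge _]]]; have := hedge e u v he; lra.
exists (\dim K).+1%:Z; split.
  split; first lia.
  move=> k; split.
    move=> [P [_ hP]]; have := aff_up fullv hP (fun i => memvf _).
    rewrite -dimK; lia.
  move=> hk.
  have : (k <= size (Xe :: s))%N by rewrite /= sz; lia.
  apply: (aff_of_seq (@P1 R V E b) (@p0 R V E e)).
  - exact: hp0.1.
  - move=> w; rewrite inE => /orP [/eqP ->|/sG [] //].
    apply: P1_mono hp0.1 _ _ => [e'|]; last by rewrite /= addr0.
    rewrite /= !ffunE; case: (e' == e); lra.
  - rewrite free_cons fs andbT; apply/negP => hX.
    have : Xe \in K by move: hX; apply/subvP/span_subvP.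
    by rewrite memK phiXe oner_eq0.
have -> : (\dim K).+1%:Z - 1 = (\dim K)%:Z by lia.
split; first lia.
move=> k; split.
  move=> [P [hS hP]].
  suff : (k <= \dim K)%N by lia.
  apply: (aff_up K hP) => i; rewrite memK.
  have [_ h1] := hS (lift ord0 i); have [_ h0] := hS ord0.
  rewrite /= !ffunE; apply/eqP; move: h1 h0; lra.
move=> hk.
have : (k <= size s)%N by rewrite sz; lia.
move=> hks.
apply: (aff_of_seq (fun p => @P1 R V E b p /\ 1 - p.2 u - p.2 v - p.1 e = 0) (@p0 R V E e) s hp0 _ fs k hks).
by move=> w /sG.
Qed.
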